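(* Let $G=(V,E,H)$ be a HEDG such that every strongly connected component $S$ of $G$ lies completely in one district of the induced sub-HEDG $\mathrm{Anc}^G(S)$. Then every pseudo-topological order for $G$ is a perfect elimination order for $G$ (and thus a quasi-topological order).
   Context: HEDG $G=(V,E,H)$: $V$ finite, $E\subseteq V\times V$ (self-loops allowed), $H$ a simplicial complex on $V$ (contains singletons, closed under subsets); $v\leftrightarrow w$ for distinct $v,w$ with $\{v,w\}\in H$. $\mathrm{Pa}^G$, $\mathrm{Anc}^G$, $\mathrm{Desc}^G$ (including the node); $\mathrm{Sc}^G(v)=\mathrm{Anc}^G(v)\cap\mathrm{Desc}^G(v)$ is the strongly connected component of $v$. Induced sub-HEDG on $A$: $(A,E\cap A^2,\{F\in H:F\subseteq A\})$; $A$ ancestral if $\mathrm{Anc}(A)=A$. District of $v$ in a HEDG: $v$ together with all nodes connected to $v$ by a bidirected path $v\leftrightarrow\cdots\leftrightarrow w$. Marginalization $G^{\mathrm{marg}\setminus U}=(V\setminus U,E',H')$: $v_1\to v_2\in E'$ iff a directed path $v_1\to u_1\to\cdots\to u_r\to v_2$ ($r\ge0$, $u_i\in U$) exists; $F'\in H'$ iff there is $F\in H$, $F\subseteq F'\cup U$, with each $v\in F'$ in $F\setminus U$ or reached by a directed path $u_1\to\cdots\to u_r\to v$ ($r\ge1$, $u_i\in U$, $u_1\in F$). Moralization: $v-w$ ($v\ne w$) iff there are $v_1,\dots,v_n$ with $v\in\{v_1\}\cup\mathrm{Pa}(v_1)$, $w\in\{v_n\}\cup\mathrm{Pa}(v_n)$,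 $v_1\leftrightarrow\cdots\leftrightarrow v_n$. $\partial_U(v)$: neighbours in undirected graph $U$. For a total order $<$ on $V$: $\mathrm{Pred}^G_\le(v)=G^{\mathrm{marg}\setminus\{w:w>v\}}$. $<$ is pseudo-topological if $w<v$ for all $v$ and all $w\in\mathrm{Anc}^G(v)\setminus\mathrm{Sc}^G(v)$; a perfect elimination order if for all $v$ and every ancestral sub-HEDG $A$ of $\mathrm{Pred}^G_\le(v)$ with $v\in A$, $\partial_{A^{\mathrm{moral}}}(v)\cup\{v\}$ is complete in $A^{\mathrm{moral}}$; quasi-topological if both. *)

(* Defs.v *)
(* HEDGs over an ambient finite type V; a HEDG carries its
   own node set (so that sub-HEDGs and marginalizations are again HEDGs). *)
From mathcomp Require Import all_boot.
Set Implicit Arguments. Unset Strict Implicit. Unset Printing Implicit Defensive.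

Section HEDG.
Variable V : finType.

Record hedg := Hedg { hV : {set V}; hE : rel V; hH : pred {set V} }.

Definition simplicial_on (S : {set V}) (h : pred {set V}) : Prop :=
  [/\ forall F, h F -> F \subset S,
      forall v, v \in S -> h [set v]
    & forall F F' : {set V}, h F -> F' \subset F -> h F'].

Definition edge (G : hedg) : rel V :=
  fun x y => [&& x \in hV G, y \in hV G & hE G x y].

Definition pa (G : hedg) (v : V) : {set V} := [set w | edge G w v].
Definition anc (G : hedg) (v : V) : {set V} := [set w in hV G | connect (edge G) w v].
Definition desc (G : hedg) (v : V) : {set V} := [set w in hV G | connect (edge G) v w].
Definition ancS (G : hedg) (A : {set V}) : {set V} := \bigcup_(v in A) anc G v.
Definition sc (G : hedg) (v : V) : {set V} := anc G v :&: desc G v.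

Definition bidir (G : hedg) : rel V :=
  fun v w => [&& v != w, v \in hV G, w \in hV G & hH G [set v; w]].
Definition district (G : hedg) (v : V) : {set V} :=
  [set w in hV G | connect (bidir G) v w].

Definition induced (G : hedg) (A : {set V}) : hedg :=
  Hedg (A :&: hV G) (hE G) [pred F | hH G F && (F \subset A :&: hV G)].

Definition ancestral (G : hedg) (A : {set V}) : bool := ancS G A == A.

Definition relIn (U : {set V}) (r : rel V) : rel V :=
  fun x y => [&& x \in U, y \in U & r x y].

Definition dpathU (G : hedg) (U : {set V}) (x y : V) : bool :=
  [exists u1 in U, exists ur in U,
     [&& edge G x u1, connect (relIn U (edge G)) u1 ur & edge G ur y]].

Definition marg (G : hedg) (U : {set V}) : hedg :=
  Hedg (hV G :\: U)
       (fun x y => edge G x y || dpathU G U x y)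
       [pred F' : {set V} | (F' \subset hV G :\: U) &&
          [exists F, [&& hH G F, F \subset F' :|: U &
             [forall v in F', (v \in F :\: U) ||
                [exists u1 in F :&: U, exists ur in U,
                   connect (relIn U (edge G)) u1 ur && edge G ur v]]]]].

Definition moral (G : hedg) : rel V :=
  fun v w => (v != w) &&
    [exists v1 in hV G, exists vn in hV G,
       [&& v \in v1 |: pa G v1, w \in vn |: pa G vn & connect (bidir G) v1 vn]].

Definition nbr (G : hedg) (v : V) : {set V} := [set w | moral G v w].

Definition complete_moral (G : hedg) (C : {set V}) : Prop :=
  {in C &, forall x y, x != y -> moral G x y}.

Definition strict_total (lt : rel V) : Prop :=
  [/\ irreflexive lt, transitive lt & forall x y, x != y -> lt x y || lt y x].

Definition pred_le (G : hedg) (lt : rel V) (v : V) : hedg :=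
  marg G [set w | lt v w].

Definition pseudo_topological (G : hedg) (lt : rel V) : Prop :=
  forall v w, v \in hV G -> w \in anc G v :\: sc G v -> lt w v.

Definition perfect_elimination_order (G : hedg) (lt : rel V) : Prop :=
  forall v, v \in hV G -> forall A : {set V},
    A \subset hV (pred_le G lt v) -> ancestral (pred_le G lt v) A -> v \in A ->
    complete_moral (induced (pred_le G lt v) A)
                   (v |: nbr (induced (pred_le G lt v) A) v).

Definition quasi_topological (G : hedg) (lt : rel V) : Prop :=
  pseudo_topological G lt /\ perfect_elimination_order G lt.

End HEDG.

(* Main.v *)
Require Import Defs.
From mathcomp Require Import all_boot.
Set Implicit Arguments. Unset Strict Implicit. Unset Printing Implicit Defensive.

Lemma comb (V : finType) (G : hedg V) (U : {set V}) (hVT : hV G = setT) a p :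
  path (edge G) a p -> last a p \notin U ->
  (a \notin U -> connect (edge (marg G U)) a (last a p)) /\
  (a \in U -> exists ur z', [/\ ur \in U, connect (relIn U (edge G)) a ur,
        edge G ur z', z' \notin U & connect (edge (marg G U)) z' (last a p)]).
Proof.
elim: p a => [|y p IH] a /=.
  move=> _ Hb; split => // Ha; by rewrite Ha in Hb.
move=> /andP[Hay Hp] Hb; have [IH1 IH2] := IH y Hp Hb.
split=> Ha; case Hy: (y \in U).
- have [ur [z' [HurU Hc He Hz' Hc']]] := IH2 Hy.
  apply: connect_trans (connect1 _) Hc'.
  rewrite /edge /= !inE hVT !inE Ha Hz' /=; apply/orP; right.
  apply/existsP; exists y; rewrite Hy /=; apply/existsP; exists ur.
  by rewrite HurU Hay Hc He.
- apply: connect_trans (connect1 _) (IH1 _); last by rewrite Hy.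
  by rewrite /edge /= !inE hVT !inE Ha Hy Hay.
- have [ur [z' [HurU Hc He Hz' Hc']]] := IH2 Hy.
  exists ur, z'; split => //.
  apply: connect_trans (connect1 _) Hc.
  by rewrite /relIn Ha Hy.
- exists a, y; split => //; first by rewrite Hy.
  by apply: IH1; rewrite Hy.
Qed.
Definition img (V : finType) (G : hedg V) (U A : {set V}) (z z' : V) : Prop :=
  [/\ z' \in A, z' \in hV G :\: U &
   (z = z' \/ (z \in U /\ exists ur, [/\ ur \in U, connect (relIn U (edge G)) z ur & edge G ur z']))].

Lemma img_side (V : finType) (G : hedg V) (U A : {set V}) a b a' :
  img G U A a a' ->
  ((a' \in [set a; b] :\: U) || [exists u1 in [set a; b] :&: U, exists ur in U,
      connect (relIn U (edge G)) u1 ur && edge G ur a'])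
  /\ a \in [set a'] :|: U.
Proof.
case=> HA /setDP[_ HU] [Heq|[Ha [ur [Hur Hc He]]]].
  by subst; rewrite !inE eqxx /= HU.
split; last by rewrite !inE Ha orbT.
apply/orP; right; apply/existsP; exists a; rewrite !inE eqxx Ha /=.
apply/existsP; exists ur; by rewrite Hur Hc He.
Qed.

Lemma bidir_img (V : finType) (G : hedg V) (U A : {set V}) a b a' b' :
  hH G [set a; b] -> img G U A a a' -> img G U A b b' ->
  connect (bidir (induced (marg G U) A)) a' b'.
Proof.
move=> HF Ia Ib.
case: (eqVneq a' b') => [->|ne]; first exact: connect0.
apply: connect1.
have [HaA HaV _] := Ia; have [HbA HbV _] := Ib.
have [S1 S1'] := img_side b Ia.
have [S2 S2'] := img_side a Ib.
have Hsub : [set a'; b'] \subset A :&: (hV G :\: U).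
  by apply/subsetP => x; rewrite !inE => /orP[]/eqP->; rewrite -?in_setD ?HaA ?HbA.
rewrite /bidir ne /= !inE -!in_setD HaA HbA HaV HbV /= Hsub andbT.
apply/andP; split.
  by apply: subset_trans Hsub _; apply: subsetIr.
apply/existsP; exists [set a; b]; rewrite HF /=.
apply/andP; split.
  apply/subsetP => x; rewrite !inE => /orP[]/eqP->.
    by move: S1'; rewrite !inE => /orP[->|->]; rewrite ?orbT.
  by move: S2'; rewrite !inE => /orP[->|->]; rewrite ?orbT.
apply/forallP => x; apply/implyP => /set2P[]->; first exact: S1.
by rewrite setUC.
Qed.
Lemma bidir_sym (V : finType) (G : hedg V) : symmetric (bidir G).
Proof.
move=> x y; rewrite /bidir eq_sym setUC.
by case: (x \in hV G); case: (y \in hV G); rewrite ?andbF ?andbT.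
Qed.

Lemma relIn_connect (V : finType) (U : {set V}) (e : rel V) x y :
  connect (relIn U e) x y -> connect e x y.
Proof.
apply: connect_sub => a b /and3P[_ _ H]; exact: connect1.
Qed.

Theorem mainTheorem11 (V : finType) (G : hedg V) :
  hV G = [set: V] ->
  simplicial_on (hV G) (hH G) ->
  (forall v : V, exists w : V,
      sc G v \subset district (induced G (ancS G (sc G v))) w) ->
  forall lt : rel V, strict_total lt ->
  pseudo_topological G lt ->
  perfect_elimination_order G lt /\ quasi_topological G lt.
Proof.
move=> hVT [_ Hsing _] Hsc lt [Hirr Htr Htot] Hpt.
suff peo : perfect_elimination_order G lt by [].
move=> v Hv A HAsub Hanc HvA.
rewrite /pred_le.
set U := [set w | lt v w].
set GA := induced (marg G U) A.
set G' := induced G (ancS G (sc G v)).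
have HvU : v \notin U by rewrite inE Hirr.
have inA : forall z, z \notin U -> connect (edge (marg G U)) z v -> z \in A.
  move=> z Hz Hc; rewrite -(eqP Hanc); apply/bigcupP; exists v => //.
  rewrite inE /= !inE hVT inE andbT; apply/andP; split => //; by move: Hz; rewrite inE.
have anc_img : forall y, connect (edge G) y v -> exists y', img G U A y y'.
  move=> y /connectP[p Hp Hl].
  have Hlv : last y p \notin U by rewrite -Hl.
  have [C1 C2] := comb hVT Hp Hlv.
  case Hy: (y \in U).
    have [ur [z' [Hur Hc He Hz' Hc']]] := C2 Hy.
    exists z'; split.
    - by apply: (inA z' Hz'); move: Hc'; rewrite -Hl.
    - by rewrite in_setD Hz' hVT in_setT.
    - by right; split => //; exists ur.
  exists y; split => //.
  - by apply: inA; rewrite ?Hy //; move: (C1 (negbT Hy)); rewrite -Hl.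
  - by rewrite in_setD Hy hVT in_setT.
  - by left.
have ancv : forall z, z \in hV G' -> connect (edge G) z v.
  move=> z; rewrite /G' /= inE => /andP[/bigcupP[s Hs]] Hz _.
  move: Hs Hz; rewrite /sc /anc !inE => /andP[/andP[_ Hsv] _] /andP[_ Hzs].
  exact: connect_trans Hzs Hsv.
have transfer : forall a b, connect (bidir G') a b -> forall a' b',
    img G U A a a' -> img G U A b b' -> connect (bidir GA) a' b'.
  move=> a b /connectP[p Hp ->] {b}.
  elim: p a Hp => [|y p IH] a /=.
    move=> _ a' b' Ia Ib; apply: (bidir_img (b := a)) Ia Ib.
    by rewrite setUid; apply: Hsing; rewrite hVT.
  move=> /andP[Hay Hp] a' b' Ia Ib.
  have Hy : y \in hV G' by case/and4P: Hay.
  have [y' Iy] := anc_img y (ancv y Hy).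
  apply: connect_trans (IH _ Hp _ _ Iy Ib).
  apply: bidir_img Ia Iy.
  by case/and4P: Hay => _ _ _ /andP[].
have sc_of : forall v1, connect (edge G) v v1 -> v1 \notin U -> connect (edge G) v1 v.
  move=> v1 H1 H2; apply/negPn/negP => Hn.
  have : lt v v1.
    apply: Hpt; first by rewrite hVT.
    by rewrite /sc !inE hVT !in_setT /= (negbTE Hn) H1.
  by move=> Hl; move: H2; rewrite inE Hl.
have key : forall w, w \in v |: nbr GA v -> exists vn,
    [/\ vn \in hV GA, w \in vn |: pa GA vn & connect (bidir GA) v vn].
  move=> w /setU1P[->|].
    exists v; split; [|exact: setU11|exact: connect0].
    by rewrite /GA /= in_setI HvA in_setD HvU hVT in_setT.
  rewrite inE => /andP[_ /existsP[v1 /andP[Hv1 /existsP[vn /andP[Hvn /and3P[H1 H2 H3]]]]]].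
  exists vn; split => //; apply: connect_trans _ H3.
  case/setU1P: H1 => [<-|]; first exact: connect0.
  rewrite inE => /and3P[_ _ Hed].
  have Hv1' := Hv1; move: Hv1'; rewrite /GA /= in_setI in_setD => /andP[Hv1A /andP[Hv1U _]].
  have Cvv1 : connect (edge G) v v1.
    case/orP: Hed => [He|/existsP[u1 /andP[_ /existsP[ur /andP[_ /and3P[E1 E2 E3]]]]]].
      exact: connect1.
    apply: connect_trans (connect1 E1) _.
    exact: connect_trans (relIn_connect E2) (connect1 E3).
  have C1v := sc_of v1 Cvv1 Hv1U.
  have [w0 Hw0] := Hsc v.
  have Hvsc : v \in sc G v by rewrite /sc !inE hVT !in_setT connect0.
  have Hv1sc : v1 \in sc G v by rewrite /sc !inE hVT !in_setT C1v Cvv1.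
  move: (subsetP Hw0 _ Hvsc) (subsetP Hw0 _ Hv1sc); rewrite !inE => /andP[_ Cw0v] /andP[_ Cw0v1].
  have Cb : connect (bidir G') v v1.
    apply: connect_trans _ Cw0v1; by rewrite (sym_connect_sym (@bidir_sym _ _)).
  apply: (transfer _ _ Cb v v1).
    by split => //; [rewrite in_setD HvU hVT in_setT | left].
  by split => //; [rewrite in_setD Hv1U hVT in_setT | left].
move=> x y Hx Hy Hxy.
have [vx [Hvx Hx' Cx]] := key x Hx.
have [vy [Hvy Hy' Cy]] := key y Hy.
rewrite /moral Hxy /=; apply/existsP; exists vx; rewrite Hvx /=.
apply/existsP; exists vy; rewrite Hvy Hx' Hy' /=.
apply: connect_trans _ Cy; by rewrite (sym_connect_sym (@bidir_sym _ _)).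
Qed.
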